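(* For each integer $n\ge4$ there exists $\phi\in\mathbb{R}$ such that $$\left|\frac{\sin n\phi}{n\sin\phi}\right|-\left|\frac{\sin (n+1)\phi}{(n+1)\sin\phi}\right|>\frac1n;$$ more precisely, with $\theta_n=\pi/(n+1)$ and $\Psi_n(\phi)$ denoting the left-hand side, $\Psi_n(\theta_n)=1/n$ and $\Psi_n(\theta_n-\delta)>1/n$ for all sufficiently small $\delta>0$.
   Context: The quantity $\Psi_n(\phi)$ equals $|a_n(L_\phi)|-|a_{n+1}(L_\phi)|$ where $L_\phi(z)=\sum_{n\ge1}\frac{\sin n\phi}{n\sin\phi}z^n$. *)

(* Defs.v *)
From Stdlib Require Import Reals Lra Lia.
Open Scope R_scope.

(* The coefficient (sin (n phi)) / (n sin phi) of z^n in L_phi. *)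
Definition coefL (n : nat) (phi : R) : R :=
  sin (INR n * phi) / (INR n * sin phi).

Definition Psi (n : nat) (phi : R) : R :=
  Rabs (coefL n phi) - Rabs (coefL (S n) phi).

Definition theta (n : nat) : R := PI / INR (S n).

(* Main.v *)
Require Import Defs.
From Stdlib Require Import Reals Lra Lia.
Open Scope R_scope.

Lemma PI_ub : PI < 3.156.
Proof.
  destruct (Rlt_or_le PI 3.156) as [h|h]; auto. exfalso.
  assert (H := SIN 0.526). unfold sin_lb, sin_approx, sin_term in H. simpl in H.
  assert (H2 := sin_PI6).
  destruct (Rle_lt_or_eq_dec 3.156 PI h) as [h'|h'].
  - assert (sin 0.526 < sin (PI/6)). apply sin_increasing_1; pose proof PI_RGT_0; lra.
    assert (0.526 <= PI) by lra. specialize (H ltac:(lra) H1). lra.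
  - rewrite <- h' in H2. assert (3.156/6 = 0.526) by lra. rewrite H0 in H2.
    assert (0.526 <= PI) by lra. specialize (H ltac:(lra) H1). lra.
Qed.

Lemma cos_lb x : 0 <= x <= PI/2 -> 1 - x*x/2 <= cos x.
Proof.
  intros [h1 h2]. destruct (cos_bound x 0) as [H _]; [lra|lra|].
  unfold cos_approx, cos_term in H. simpl in H. lra.
Qed.

Lemma key (n : nat) (hn : (4 <= n)%nat) (delta : R) :
  0 < delta < 1 / (1000 * (INR n + 1) * INR n) ->
  Psi n (theta n - delta) > 1 / INR n.
Proof.
  intros [d0 d1].
  assert (HN : 4 <= INR n) by (replace 4 with (INR 4) by (simpl; lra); apply le_INR; exact hn).
  set (N := INR n) in *.
  assert (HPI := PI_ub). assert (HPI0 := PI_RGT_0). assert (HPI3 := PI2_3_2).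
  assert (Hd : delta * (1000 * (N+1) * N) < 1).
  { apply (Rmult_lt_compat_r (1000 * (N+1) * N)) in d1; [|nra].
    replace (1 / (1000 * (N + 1) * N) * (1000 * (N + 1) * N)) with 1 in d1 by (field; lra). lra. }
  assert (HdN : (N+1) * (N * delta) < 1/1000).
  { replace ((N+1) * (N*delta)) with (delta * (1000 * (N+1) * N) / 1000) by field. lra. }
  assert (HdN' : N * delta < 1/1000) by nra.
  set (th := theta n).
  assert (Hth : th * (N+1) = PI).
  { unfold th, theta. rewrite S_INR. fold N. field. lra. }
  assert (th0 : 0 < th) by (unfold th, theta; apply Rdiv_lt_0_compat; [lra| apply lt_0_INR; lia]).
  assert (thub : th * (N+1) <= 3.156) by lra.
  set (u := (N+1)*delta/2). set (A := th + (N-1)*delta/2).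
  assert (E1 : N * (th - delta) = PI - (A + u)) by (unfold u, A; nra).
  assert (E2 : INR (S n) * (th - delta) = PI - 2*u) by (rewrite S_INR; fold N; unfold u; nra).
  assert (E3 : th - delta = A - u) by (unfold A, u; field).
  unfold Psi, coefL. fold th. fold N. rewrite E1, E2, E3, !sin_PI_x. rewrite S_INR; fold N.
  assert (HA : A * (N+1) <= 3.157).
  { unfold A. replace ((th + (N - 1) * delta / 2) * (N + 1)) with (th*(N+1) + (N+1)*((N-1)*delta/2)) by ring.
    assert ((N+1)*((N-1)*delta/2) <= (N+1)*(N*delta)) by nra. lra. }
  assert (A0 : 0 < A) by (unfold A; assert (0 <= (N-1)*delta) by (apply Rmult_le_pos; lra); lra).
  assert (Au_pos : 0 < A - u).
  { rewrite <- E3. assert ((N+1)*delta <= (N+1)*(N*delta)) by (apply Rmult_le_compat_l; nra).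
    assert (delta*(N+1) < 1) by lra.
    assert ((th - delta)*(N+1) > 0) by (replace ((th - delta)*(N+1)) with (th*(N+1) - delta*(N+1)) by ring; lra).
    destruct (Rle_or_lt (th - delta) 0); [|lra]. nra. }
  assert (AuPI : A + u < PI).
  { assert (A + u = th + N*delta) by (unfold A, u; field). nra. }
  assert (u0 : 0 < u) by (unfold u; nra).
  assert (u2 : 2*u < PI) by (unfold u; nra).
  assert (S1 : 0 < sin (A - u)) by (apply sin_gt_0; lra).
  assert (S2 : 0 < sin (A + u)) by (apply sin_gt_0; lra).
  assert (S3 : 0 < sin (2*u)) by (apply sin_gt_0; lra).
  assert (S4 : 0 < sin u) by (apply sin_gt_0; lra).
  assert (Cu : cos u <= 1) by (destruct (COS_bound u); lra).
  assert (HA2 : A <= PI/2) by nra.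
  assert (CA := cos_lb A ltac:(lra)).
  assert (KA : (N+1) * A * A < 2).
  { assert (A * (N+1) * (A * (N+1)) <= 3.157 * 3.157).
    { apply Rmult_le_compat; nra. }
    assert ((N+1) * A * A * (N+1) < 2 * (N+1)).
    { replace ((N+1) * A * A * (N+1)) with (A * (N+1) * (A * (N+1))) by ring. lra. }
    apply (Rmult_lt_reg_r (N+1)); lra. }
  assert (CA2 : (N+1) * cos A > N) by nra.
  rewrite !Rabs_pos_eq.
  2: apply Rlt_le, Rdiv_lt_0_compat; nra.
  2: apply Rlt_le, Rdiv_lt_0_compat; nra.
  rewrite sin_plus, sin_2a. rewrite sin_minus in S1 |- *.
  set (s := sin A * cos u - cos A * sin u) in *.
  assert (EQ : (sin A * cos u + cos A * sin u) / (N * s) - 2 * sin u * cos u / ((N + 1) * s) - 1 / N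
             = 2 * sin u * ((N+1) * cos A - N * cos u) / (N * (N+1) * s)).
  { unfold s in *. field. lra. }
  apply Rminus_gt. rewrite EQ. apply Rdiv_lt_0_compat; [|nra].
  apply Rmult_lt_0_compat; [lra|]. nra.
Qed.

Theorem mainTheorem3 (n : nat) (hn : (4 <= n)%nat) :
  (exists phi : R, Psi n phi > 1 / INR n) /\
  Psi n (theta n) = 1 / INR n /\
  (exists eps : R, eps > 0 /\
     forall delta : R, 0 < delta < eps -> Psi n (theta n - delta) > 1 / INR n).
Proof.
  assert (HN : 4 <= INR n) by (replace 4 with (INR 4) by (simpl; lra); apply le_INR; exact hn).
  set (eps := 1 / (1000 * (INR n + 1) * INR n)).
  assert (e0 : eps > 0) by (unfold eps; apply Rdiv_lt_0_compat; nra).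
  split; [|split].
  - exists (theta n - eps/2). apply key; auto. fold eps. lra.
  - assert (HPI0 := PI_RGT_0).
    assert (Hth : theta n * INR (S n) = PI) by (unfold theta; field; apply not_0_INR; lia).
    assert (th0 : 0 < theta n) by (unfold theta; apply Rdiv_lt_0_compat; [lra| apply lt_0_INR; lia]).
    assert (thPI : theta n < PI) by (rewrite S_INR in Hth; nra).
    unfold Psi, coefL.
    rewrite (Rmult_comm (INR (S n))), Hth, sin_PI.
    replace (INR n * theta n) with (PI - theta n) by (rewrite S_INR in Hth; lra).
    rewrite sin_PI_x.
    assert (s0 : 0 < sin (theta n)) by (apply sin_gt_0; lra).
    unfold Rdiv at 2. rewrite Rmult_0_l, Rabs_R0, Rminus_0_r.
    rewrite Rabs_pos_eq. field. split; lra.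
    apply Rlt_le, Rdiv_lt_0_compat; nra.
  - exists eps. split; auto. intros; apply key; auto.
Qed.
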